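(* Let $G=(\mathfrak{N},\mathfrak{T},\mathfrak{R},\mathfrak{S})$ be a context-free grammar, $\Sigma$ a set of characters, $(\textsl{Lex},\textsl{Sel})$ a local lexing and $D\in\Sigma^*$. For $k\in\{0,\ldots,|D|\}$ let $\mathcal{Z}_k^\infty=\bigcup_{u\ge0}\mathcal{Z}_k^u$. Then for every token sequence $p$: $p\in\mathfrak{P}$ if and only if (a) for all $0\le i<|p|$, $p_i\in\mathcal{Z}_{|\overline{p_0\ldots p_{i-1}}|}^{\infty}$, and (b) $[p]\in\mathcal{L}_{\text{prefix}}$.
   Context: Notation: for a set $U$, $U^*$ is the set of finite sequences over $U$, $\varepsilon$ the empty sequence, juxtaposition is concatenation, $|\alpha|$ the length and $\alpha_i$ ($0\le i<|\alpha|$) the $i$-th element. A context-free grammar $(\mathfrak{N},\mathfrak{T},\mathfrak{R},\mathfrak{S})$ has disjoint nonterminals $\mathfrak{N}$ and terminals $\mathfrak{T}$, rules $\mathfrak{R}\subseteq\mathfrak{N}\times(\mathfrak{N}\cup\mathfrak{T})^*$ (written $N\rightarrow\alpha$), start symbol $\mathfrak{S}$; $\overset{*}{\Rightarrow}$ is the reflexive-transitive closure of one-step rewriting by rules. $\mathcal{L}_{\text{prefix}}=\{w\in\mathfrak{T}^*\mid\exists\alpha\in(\mathfrak{N}\cup\mathfrak{T})^*.\ \mathfrak{S}\overset{*}{\Rightarrow}w\alpha\}$. Tokens: a token is a pair $x=(t,c)\in\mathfrak{T}\times\Sigma^*$; $[x]=t$, $\overline{x}=c$. For a token sequence (path) $q=x_0\ldots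 x_r$, $[q]=[x_0]\ldots[x_r]$ and $\overline{q}=\overline{x_0}\ldots\overline{x_r}$ (for $i=0$, $\overline{p_0\ldots p_{i-1}}$ is the empty sequence). Local lexing: a pair $(\textsl{Lex},\textsl{Sel})$ where $\textsl{Lex}$ assigns to each $t\in\mathfrak{T}$ a function $\textsl{Lex}(t)$ which, given $D\in\Sigma^*$ and $k\in\{0,\ldots,|D|\}$, returns a set of tokens $(t,c)$ with $k+|c|\le|D|$ and $c_i=D_{k+i}$ for $0\le i\le|c|-1$; and $\textsl{Sel}$ maps any two token sets $A\subseteq B$ to a token set with $A\subseteq\textsl{Sel}(A,B)\subseteq B$. Path sets: $\operatorname{limit} f\,X=\bigcup_{n\ge0}f^n(X)$. $\operatorname{Append}_k\,T\,P=P\cup\{pt\mid p\in P,\ |\overline{p}|=k,\ t\in T,\ [pt]\in\mathcal{L}_{\text{prefix}}\}$. For $k\in\{0,\ldots,|D|\}$: $\mathcal{X}_k=\{x\in\mathfrak{T}\times\Sigma^*\mid x\in\textsl{Lex}([x])(D,k)\}$; $\mathcal{P}_0^0=\{\varepsilon\}$; $\mathcal{W}_k^u=\{x\in\mathcal{X}_k\mid\exists p\in\mathcal{P}_k^u.\ |\overline{p}|=k\wedge[px]\in\mathcal{L}_{\text{prefix}}\}$; $\mathcal{Z}_k^0=\emptyset$; $\mathcal{Z}_k^{u+1}=\textsl{Sel}(\mathcal{Z}_k^u,\mathcal{W}_k^u)$; $\mathcal{P}_k^{u+1}=\operatorname{limit}(\operatorname{Append}_k\,\mathcal{Z}_k^{u+1})\,\mathcal{P}_k^u$;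 $\mathcal{P}_k^\infty=\bigcup_u\mathcal{P}_k^u$; $\mathcal{P}_{k+1}^0=\mathcal{P}_k^\infty$. Finally $\mathfrak{P}=\mathcal{P}_{|D|}^\infty$. *)

(* Defs.v *)
(* sets are predicates, sequences are lists. *)
From Stdlib Require Import List Arith.
Import ListNotations.
Set Implicit Arguments.

(* Nonterminals NT and terminals TT are disjoint by construction (sum type). *)
Inductive symbol (NT TT : Type) : Type :=
  | Nsym : NT -> symbol NT TT
  | Tsym : TT -> symbol NT TT.
Arguments Nsym {NT TT} _.
Arguments Tsym {NT TT} _.

Record grammar (NT TT : Type) : Type := Grammar {
  g_rules : NT -> list (symbol NT TT) -> Prop;
  g_start : NT
}.

Definition derives1 {NT TT} (G : grammar NT TT) (a b : list (symbol NT TT)) : Prop :=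
  exists (u v : list (symbol NT TT)) (N : NT) (alpha : list (symbol NT TT)),
    g_rules G N alpha /\ a = u ++ Nsym N :: v /\ b = u ++ alpha ++ v.

Inductive derives {NT TT} (G : grammar NT TT) :
    list (symbol NT TT) -> list (symbol NT TT) -> Prop :=
  | derives_refl : forall a, derives G a a
  | derives_step : forall a b c, derives1 G a b -> derives G b c -> derives G a c.

Definition Lprefix {NT TT} (G : grammar NT TT) (w : list TT) : Prop :=
  exists alpha, derives G [Nsym (g_start G)] (map Tsym w ++ alpha).

Definition token (TT Sigma : Type) : Type := (TT * list Sigma)%type.
Definition tset (TT Sigma : Type) : Type := token TT Sigma -> Prop.
Definition pset (TT Sigma : Type) : Type := list (token TT Sigma) -> Prop.

Definition tsubset {TT Sigma} (A B : tset TT Sigma) : Prop := forall x, A x -> B x.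

(* [q] : sequence of terminals;  overline q : concatenated character string *)
Definition terms {TT Sigma} (q : list (token TT Sigma)) : list TT := map fst q.
Definition chars {TT Sigma} (q : list (token TT Sigma)) : list Sigma := concat (map snd q).

Record local_lexing (TT Sigma : Type) : Type := LocalLexing {
  Lex : TT -> list Sigma -> nat -> tset TT Sigma;
  Sel : tset TT Sigma -> tset TT Sigma -> tset TT Sigma;
  Lex_spec : forall (t : TT) (D : list Sigma) (k : nat) (x : token TT Sigma),
    k <= length D -> Lex t D k x ->
      fst x = t /\ k + length (snd x) <= length D /\
      (forall i, i < length (snd x) -> nth_error (snd x) i = nth_error D (k + i));
  Sel_spec : forall A B : tset TT Sigma, tsubset A B ->
      tsubset A (Sel A B) /\ tsubset (Sel A B) B
}.

Section Paths.
Context {NT TT Sigma : Type} (G : grammar NT TT) (LL : local_lexing TT Sigma)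
        (D : list Sigma).

Definition limit (f : pset TT Sigma -> pset TT Sigma) (X : pset TT Sigma)
  : pset TT Sigma := fun p => exists n, Nat.iter n f X p.

Definition Append (k : nat) (T : tset TT Sigma) (P : pset TT Sigma) : pset TT Sigma :=
  fun q => P q \/ exists p t, q = p ++ [t] /\ P p /\ length (chars p) = k /\ T t /\
                          Lprefix G (terms (p ++ [t])).

Definition Xk (k : nat) : tset TT Sigma := fun x => Lex LL (fst x) D k x.

Definition Wk (k : nat) (P : pset TT Sigma) : tset TT Sigma :=
  fun x => Xk k x /\ exists p, P p /\ length (chars p) = k /\ Lprefix G (terms (p ++ [x])).

(* (Z_k^u, P_k^u) |-> (Z_k^{u+1}, P_k^{u+1}) *)
Definition step (k : nat) (ZP : tset TT Sigma * pset TT Sigma)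
  : tset TT Sigma * pset TT Sigma :=
  let Z' := Sel LL (fst ZP) (Wk k (snd ZP)) in
  (Z', limit (Append k Z') (snd ZP)).

Fixpoint P0 (k : nat) : pset TT Sigma :=
  match k with
  | 0 => fun p => p = []
  | S k' => fun p => exists u, snd (Nat.iter u (step k') (fun _ => False, P0 k')) p
  end.

(* (Z_k^u, P_k^u), with Z_k^0 = empty *)
Definition ZP (k u : nat) : tset TT Sigma * pset TT Sigma :=
  Nat.iter u (step k) (fun _ => False, P0 k).

Definition Zk (k u : nat) : tset TT Sigma := fst (ZP k u).
Definition Pk (k u : nat) : pset TT Sigma := snd (ZP k u).
Definition Zinf (k : nat) : tset TT Sigma := fun x => exists u, Zk k u x.
Definition Pinf (k : nat) : pset TT Sigma := fun p => exists u, Pk k u p.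

Definition frakP : pset TT Sigma := Pinf (length D).

End Paths.

(* Main.v *)
Require Import Defs.
From Stdlib Require Import List Arith Lia.
Import ListNotations.

Section S.
Context {NT TT Sigma : Type} (G : grammar NT TT) (LL : local_lexing TT Sigma)
        (D : list Sigma).

Lemma chars_snoc (p : list (token TT Sigma)) t :
  chars (p ++ [t]) = chars p ++ snd t.
Proof. unfold chars. rewrite map_app, concat_app. simpl. rewrite app_nil_r. reflexivity. Qed.

Lemma Lprefix_nil : Lprefix G [].
Proof. exists [Nsym (g_start G)]. simpl. constructor. Qed.

Lemma Lprefix_snoc (w : list TT) t : Lprefix G (w ++ [t]) -> Lprefix G w.
Proof.
  intros [alpha H]. exists (Tsym t :: alpha).
  rewrite map_app, <- app_assoc in H. exact H.
Qed.

Lemma Pk_S k u q : Pk G LL D k u q -> Pk G LL D k (S u) q.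
Proof. intros H. unfold Pk. simpl. exists 0. exact H. Qed.

Lemma Pk_le k u u' q : u <= u' -> Pk G LL D k u q -> Pk G LL D k u' q.
Proof. induction 1; auto. intros. apply Pk_S; auto. Qed.

Lemma Wk_mono k (P P' : pset TT Sigma) :
  (forall q, P q -> P' q) -> tsubset (Wk G LL D k P) (Wk G LL D k P').
Proof.
  intros HP x [Hx [p [Hp Hr]]]. split; auto. exists p; auto.
Qed.

Lemma ZW k u : tsubset (Zk G LL D k u) (Wk G LL D k (Pk G LL D k u)).
Proof.
  induction u.
  - intros x H. destruct H.
  - intros x H. change (Sel LL (Zk G LL D k u) (Wk G LL D k (Pk G LL D k u)) x) in H.
    apply (proj2 (Sel_spec LL IHu)) in H.
    eapply Wk_mono; [|exact H]. apply Pk_S.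
Qed.

Lemma Zk_S k u x : Zk G LL D k u x -> Zk G LL D k (S u) x.
Proof.
  intros H. change (Sel LL (Zk G LL D k u) (Wk G LL D k (Pk G LL D k u)) x).
  apply (proj1 (Sel_spec LL (ZW k u))). exact H.
Qed.

Lemma Zk_le k u u' x : u <= u' -> Zk G LL D k u x -> Zk G LL D k u' x.
Proof. induction 1; auto. intros. apply Zk_S; auto. Qed.

Lemma Pinf_S k q : Pinf G LL D k q -> Pinf G LL D (S k) q.
Proof. intros H. exists 0. exact H. Qed.

Lemma Pinf_le k k' q : k <= k' -> Pinf G LL D k q -> Pinf G LL D k' q.
Proof. induction 1; auto. intros. apply Pinf_S; auto. Qed.

Lemma down j u q : Pk G LL D j u q -> length (chars q) < j -> P0 G LL D j q.
Proof.
  revert q. induction u; intros q H Hl.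
  - exact H.
  - destruct H as [n Hn]. revert q Hn Hl. induction n; intros q Hn Hl.
    + apply IHu; auto.
    + destruct Hn as [Hn | [p [t [-> [Hp [Hc _]]]]]].
      * apply IHn; auto.
      * rewrite chars_snoc, length_app in Hl. lia.
Qed.

Lemma down_inf d k q : Pinf G LL D (d + k) q -> length (chars q) <= k -> Pinf G LL D k q.
Proof.
  induction d; simpl; intros H Hl; auto.
  apply IHd; auto. destruct H as [u Hu].
  exact (down (S (d + k)) u q Hu ltac:(lia)).
Qed.

Definition Inv k (q : list (token TT Sigma)) :=
  (forall (i : nat) (x : token TT Sigma),
       i < length q -> nth_error q i = Some x ->
       length (chars (firstn i q)) <= k /\
       Zinf G LL D (length (chars (firstn i q))) x)
   /\ Lprefix G (terms q).

Lemma Inv_le k k' q : k <= k' -> Inv k q -> Inv k' q.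
Proof.
  intros Hk [H1 H2]. split; auto. intros i x Hi Hx.
  destruct (H1 i x Hi Hx). split; auto. lia.
Qed.

Lemma Inv_snoc_l k q x : Inv k (q ++ [x]) -> Inv k q.
Proof.
  intros [H1 H2]. split.
  - intros i y Hi Hy. 
    assert (Hi' : i < length (q ++ [x])) by (rewrite length_app; simpl; lia).
    specialize (H1 i y Hi').
    rewrite firstn_app, nth_error_app1 in H1 by auto.
    replace (i - length q) with 0 in H1 by lia. simpl in H1.
    rewrite app_nil_r in H1. auto.
  - unfold terms in *. rewrite map_app in H2. eapply Lprefix_snoc; eauto.
Qed.

Lemma Inv_snoc k q x : Inv k q -> length (chars q) <= k ->
  Zinf G LL D (length (chars q)) x -> Lprefix G (terms (q ++ [x])) -> Inv k (q ++ [x]).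
Proof.
  intros [H1 H2] Hl Hz Hp. split; auto.
  intros i y Hi Hy. rewrite length_app in Hi; simpl in Hi.
  destruct (Nat.eq_dec i (length q)) as [-> | Hne].
  - rewrite nth_error_app2 in Hy by lia. rewrite Nat.sub_diag in Hy. simpl in Hy.
    injection Hy as <-. rewrite firstn_app, firstn_all, Nat.sub_diag. simpl.
    rewrite app_nil_r. auto.
  - assert (i < length q) by lia.
    rewrite nth_error_app1 in Hy by auto.
    rewrite firstn_app. replace (i - length q) with 0 by lia. simpl.
    rewrite app_nil_r. auto.
Qed.

Lemma fwd k : forall u q, Pk G LL D k u q -> Inv k q.
Proof.
  induction k.
  - intros u. induction u; intros q H.
    + simpl in H. unfold Pk, ZP in H. simpl in H. subst q.
      split. intros i x Hi. simpl in Hi. lia. apply Lprefix_nil.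
    + destruct H as [n Hn]. revert q Hn. induction n; intros q Hn.
      * apply IHu; auto.
      * destruct Hn as [Hn | [p [t [-> [Hp [Hc [Ht Hl]]]]]]]; auto.
        apply Inv_snoc; auto; rewrite Hc; auto. exists (S u). exact Ht.
  - intros u. induction u; intros q H.
    + destruct H as [u' Hu']. apply Inv_le with k; auto. eapply IHk; eauto.
    + destruct H as [n Hn]. revert q Hn. induction n; intros q Hn.
      * apply IHu; auto.
      * destruct Hn as [Hn | [p [t [-> [Hp [Hc [Ht Hl]]]]]]]; auto.
        apply Inv_snoc; auto; rewrite Hc; auto. exists (S u). exact Ht.
Qed.

Lemma bwd : forall q, Inv (length D) q -> Pinf G LL D (length D) q.
Proof.
  induction q as [|x q IH] using rev_ind; intros H.
  - apply (Pinf_le 0). lia. exists 0. reflexivity.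
  - pose proof (Inv_snoc_l _ _ _ H) as Hq.
    specialize (IH Hq).
    destruct H as [H1 H2].
    assert (Hi : length q < length (q ++ [x])) by (rewrite length_app; simpl; lia).
    assert (Hn : nth_error (q ++ [x]) (length q) = Some x)
      by (rewrite nth_error_app2, Nat.sub_diag by lia; reflexivity).
    destruct (H1 _ _ Hi Hn) as [Hk [u2 Hz]].
    rewrite firstn_app, firstn_all, Nat.sub_diag in Hk, Hz. simpl in Hk, Hz.
    rewrite app_nil_r in Hk, Hz.
    set (k0 := length (chars q)) in *.
    assert (Hq0 : Pinf G LL D k0 q).
    { apply (down_inf (length D - k0)); auto. replace (length D - k0 + k0) with (length D) by lia. auto. }
    destruct Hq0 as [u1 Hu1].
    apply (Pinf_le k0); auto.
    exists (S (u1 + u2)). exists 1. simpl. right.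
    exists q, x. split; auto. split.
    + apply (Pk_le k0 u1); auto. lia.
    + split; auto. split; auto.
      apply (Zk_le k0 u2 (S (u1 + u2))); auto. lia.
Qed.

End S.

Theorem theorem4 (NT TT Sigma : Type) (G : grammar NT TT)
    (LL : local_lexing TT Sigma) (D : list Sigma) (p : list (token TT Sigma)) :
  frakP G LL D p <->
  ((forall (i : nat) (x : token TT Sigma),
       i < length p -> nth_error p i = Some x ->
       length (chars (firstn i p)) <= length D /\
       Zinf G LL D (length (chars (firstn i p))) x)
   /\ Lprefix G (terms p)).
Proof.
  split.
  - intros [u Hu]. exact (fwd G LL D (length D) u p Hu).
  - intros H. exact (bwd G LL D p H).
Qed.
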